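(* Let $\mathbb D^2=\{x\in\mathbb R^2:|x|<1\}$, let $a=(a_1,0)$ with $a_1\ne0$, $|a_1|<1$, and let $$\mathcal F_a(x,y)=\frac{\sqrt{|y|^2-\left(|x|^2|y|^2-\langle x,y\rangle^2\right)}}{1-|x|^2}+\frac{\langle x,y\rangle}{1-|x|^2}+\frac{\langle a,y\rangle}{1+\langle a,x\rangle}.$$ Parametrize the indicatrix $\mathcal I_0=\{y\in T_0\mathbb D^2:\mathcal F_a(0,y)=1\}$ by $t\mapsto\left(\frac{\cos t}{1+a_1\cos t},\frac{\sin t}{1+a_1\cos t}\right)$, $t\in\mathbb R/2\pi\mathbb Z$. Let $\xi_0$ be the restriction to $\mathcal I_0$ of the curvature vector field $R(\partial_{x_1},\partial_{x_2})$, and for integers $l,m\ge0$ let $\xi_0^{l,m}=(\sin^l t\cos^m t)\,\xi_0\in\mathfrak X^\infty(\mathcal I_0)$. For $n\in\mathbb N$ put $\Sigma_n=\mathrm{Span}_{\mathbb R}\{\xi_0^{l,m}: l+m\le n\}$. Then for every $n\in\mathbb N$, $\Sigma_n\subset\mathfrak{hol}^*_0(\mathbb D^2)$, the infinitesimal holonomy algebra at $0$.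
   Context: For a Finsler manifold $(M,\mathcal F)$ with geodesic coefficients $G^i(x,y)=\frac14 g^{il}\big(2\frac{\partial g_{jl}}{\partial x^k}-\frac{\partial g_{jk}}{\partial x^l}\big)y^jy^k$ (where $g_{ij}=\frac12\partial^2\mathcal F^2/\partial y^i\partial y^j$), set $G^i_j=\partial G^i/\partial y^j$, $G^i_{jk}=\partial G^i_j/\partial y^k$. The curvature tensor is $R=R^i_{jk}\,dx^j\otimes dx^k\otimes\frac{\partial}{\partial y^i}$ with $R^i_{jk}=\frac{\partial G^i_j}{\partial x^k}-\frac{\partial G^i_k}{\partial x^j}+G^m_jG^i_{km}-G^m_kG^i_{jm}$; for vector fields $X,Y$ on $M$, $R(X,Y)$ is a vector field on $TM$ (a curvature vector field). The horizontal Berwald covariant derivative of a vertical vector field $\xi=\xi^i(x,y)\partial_{y^i}$ along $X=X^j\partial_{x^j}$ is $\nabla_X\xi=\big(\frac{\partial\xi^i}{\partial x^j}-G^k_j\frac{\partial\xi^i}{\partial y^k}+G^i_{jk}\xi^k\big)X^j\partial_{y^i}$. The infinitesimal holonomy algebra $\mathfrak{hol}^*(M)$ is the smallest Lie algebra of vector fields on $TM$ containing all curvature vector fields and closed under $\xi\mapsto\nabla_X\xi$ for all vector fields $X$ on $M$; $\mathfrak{hol}^*_x(M)=\{\xi|_{\mathcal I_x}:\xi\in\mathfrak{hol}^*(M)\}$, a Lie subalgebra of $\mathfrak X^\infty(\mathcal I_x)$, where $\mathcal I_x=\{y\in T_xM:\mathcal F(y)=1\}$. *)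

(* Defs.v *)
From Stdlib Require Import Reals List.
From Coquelicot Require Import Coquelicot.
Open Scope R_scope.

(** Coordinates on the disk D^2 and on T_x D^2 = R^2 are pairs (R*R).
    Indices i,j,k,... range over {0,1} (coordinate 0 = first, 1 = second);
    all index sums are written with [sum2]. *)

Definition coord (p : R * R) (j : nat) : R :=
  match j with O => fst p | _ => snd p end.

Definition upd (p : R * R) (j : nat) (s : R) : R * R :=
  match j with O => (s, snd p) | _ => (fst p, s) end.

Definition sum2 (F : nat -> R) : R := F O + F 1%nat.

Definition dot (u v : R * R) : R := fst u * fst v + snd u * snd v.
Definition sqn (u : R * R) : R := dot u u.

Definition in_disk (p : R * R) : Prop := sqn p < 1.

Definition dX (j : nat) (h : R * R -> R * R -> R) : R * R -> R * R -> R :=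
  fun x y => Derive (fun s => h (upd x j s) y) (coord x j).
Definition dY (k : nat) (h : R * R -> R * R -> R) : R * R -> R * R -> R :=
  fun x y => Derive (fun s => h x (upd y k s)) (coord y k).

Fixpoint pder (l : list nat) (f : R * R -> R) : R * R -> R :=
  match l with
  | nil => f
  | j :: l' => fun p => Derive (fun s => pder l' f (upd p j s)) (coord p j)
  end.

Definition smooth_on_disk (f : R * R -> R) : Prop :=
  forall (l : list nat) (p : R * R), in_disk p ->
    continuous (pder l f) p /\
    forall j : nat, ex_derive (fun s => pder l f (upd p j s)) (coord p j).

Definition smooth_vf (X : R * R -> R * R) : Prop :=
  smooth_on_disk (fun p => fst (X p)) /\ smooth_on_disk (fun p => snd (X p)).

Definition Fa (a1 : R) (x y : R * R) : R :=
  sqrt (sqn y - (sqn x * sqn y - (dot x y) ^ 2)) / (1 - sqn x)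
  + dot x y / (1 - sqn x)
  + dot (a1, 0) y / (1 + dot (a1, 0) x).

Definition Esq (a1 : R) : R * R -> R * R -> R := fun x y => (Fa a1 x y) ^ 2.

Definition gm (a1 : R) (i j : nat) : R * R -> R * R -> R :=
  fun x y => / 2 * dY i (dY j (Esq a1)) x y.

Definition gdet (a1 : R) (x y : R * R) : R :=
  gm a1 0 0 x y * gm a1 1 1 x y - gm a1 0 1 x y * gm a1 1 0 x y.

Definition ginv (a1 : R) (i l : nat) (x y : R * R) : R :=
  match i, l with
  | O, O => gm a1 1 1 x y / gdet a1 x y
  | O, _ => - gm a1 0 1 x y / gdet a1 x y
  | _, O => - gm a1 1 0 x y / gdet a1 x y
  | _, _ => gm a1 0 0 x y / gdet a1 x y
  end.

Definition Gc (a1 : R) (i : nat) : R * R -> R * R -> R :=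
  fun x y => / 4 * sum2 (fun l => ginv a1 i l x y *
     sum2 (fun j => sum2 (fun k =>
       (2 * dX k (gm a1 j l) x y - dX l (gm a1 j k) x y)
       * coord y j * coord y k))).

Definition G1 (a1 : R) (i j : nat) : R * R -> R * R -> R := dY j (Gc a1 i).
Definition G2 (a1 : R) (i j k : nat) : R * R -> R * R -> R := dY k (G1 a1 i j).

Definition Rc (a1 : R) (i j k : nat) : R * R -> R * R -> R :=
  fun x y => dX k (G1 a1 i j) x y - dX j (G1 a1 i k) x y
    + sum2 (fun m => G1 a1 m j x y * G2 a1 i k m x y
                     - G1 a1 m k x y * G2 a1 i j m x y).

(** Vertical vector fields xi = xi^i(x,y) d_{y^i} on TM, given by their
    components xi i (i = 0, 1). *)
Definition vfield := nat -> R * R -> R * R -> R.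

Definition curv (a1 : R) (X Y : R * R -> R * R) : vfield :=
  fun i x y => sum2 (fun j => sum2 (fun k =>
     Rc a1 i j k x y * coord (X x) j * coord (Y x) k)).

Definition nabla (a1 : R) (X : R * R -> R * R) (xi : vfield) : vfield :=
  fun i x y => sum2 (fun j =>
     (dX j (xi i) x y
      - sum2 (fun k => G1 a1 k j x y * dY k (xi i) x y)
      + sum2 (fun k => G2 a1 i j k x y * xi k x y)) * coord (X x) j).

Definition vbracket (xi eta : vfield) : vfield :=
  fun i x y => sum2 (fun k => xi k x y * dY k (eta i) x y
                              - eta k x y * dY k (xi i) x y).

Inductive hol (a1 : R) : vfield -> Prop :=
| hol_curv X Y : smooth_vf X -> smooth_vf Y -> hol a1 (curv a1 X Y)
| hol_add xi eta : hol a1 xi -> hol a1 eta ->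
    hol a1 (fun i x y => xi i x y + eta i x y)
| hol_scal (c : R) xi : hol a1 xi -> hol a1 (fun i x y => c * xi i x y)
| hol_bracket xi eta : hol a1 xi -> hol a1 eta -> hol a1 (vbracket xi eta)
| hol_nabla X xi : smooth_vf X -> hol a1 xi -> hol a1 (nabla a1 X xi).

Definition gam (a1 t : R) : R * R :=
  (cos t / (1 + a1 * cos t), sin t / (1 + a1 * cos t)).

Definition xi0 (a1 : R) (i : nat) (y : R * R) : R := Rc a1 i 0 1 (0, 0) y.

(* Main.v *)
Require Import Defs.
From Stdlib Require Import Reals Lra Lia List Arith Wf_nat.
From Coquelicot Require Import Coquelicot.
Open Scope R_scope.

(* Proof outline: on a neighbourhood U of (x=0, y<>0) we compute in closed form
   the metric g, the spray G^i = P y^i (P = (F_Funk - beta)/2), the curvature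
   field xi = R(d1,d2) = (F/4)(F_2, -F_1), nabla_j xi = 3 P_j xi and a second
   covariant derivative; at x = 0 all of them are multiples f(omega) xi0 of xi0
   with omega = y/|y|.  Brackets [f xi0, g xi0] = (f D g - g D f) xi0, and an
   induction on the degree shows all monomials sin^l cos^m are reached. *)

Definition Aq (x y : R*R) := sqn y - (sqn x * sqn y - (dot x y)^2).
Definition Ff (x y : R*R) := sqrt (Aq x y) / (1 - sqn x) + dot x y / (1 - sqn x).
Definition phi (x y : R*R) (l : nat) := ((1 - sqn x) * coord y l + dot x y * coord x l) / (sqrt (Aq x y) * (1 - sqn x)) + coord x l / (1 - sqn x).
Definition zz (y : R*R) (l : nat) := match l with O => - snd y | _ => fst y end.
Definition rho x y := / (sqrt (Aq x y))^3.
Definition bet a (x y : R*R) := dot (a,0) y / (1 + dot (a,0) x).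
Definition bb a (x : R*R) l := coord (a,0) l / (1 + dot (a,0) x).

Lemma sqrt_sq_rel z : 0 < z -> sqrt z * sqrt z = z.
Proof. intros; apply sqrt_sqrt; lra. Qed.

Ltac prep HA := let Hr := fresh "Hr" in let Hp := fresh "Hp" in
  pose proof (sqrt_sq_rel _ HA) as Hr; pose proof (sqrt_lt_R0 _ HA) as Hp.

Ltac sidec := repeat match goal with
  | |- _ /\ _ => split
  | |- True => exact I
  | |- _ * _ <> 0 => apply Rmult_integral_contrapositive_currified
  | |- _ ^ _ <> 0 => apply pow_nonzero
  | |- _ <> 0 => first [assumption | lra]
  | |- 0 < _ => first [assumption | lra]
  end.

Ltac dsolve HA := let Hr := fresh "Hr" in let Hp := fresh "Hp" in
  pose proof (sqrt_sq_rel _ HA) as Hr; pose proof (sqrt_lt_R0 _ HA) as Hp;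
  auto_derive; unfold Rminus in *; sidec; (field [Hr]; sidec).

Lemma dy_Ff x y k : 0 < Aq x y -> 1 - sqn x <> 0 ->
  is_derive (fun s => Ff x (upd y k s)) (coord y k) (phi x y k).
Proof.
  destruct x as [x0 x1], y as [y0 y1]; intros HA HL.
  unfold Ff, phi, Aq, sqn, dot in *; destruct k; simpl in *; dsolve HA.
Qed.

Lemma dx_Ff x y k : 0 < Aq x y -> 1 - sqn x <> 0 ->
  is_derive (fun s => Ff (upd x k s) y) (coord x k) (Ff x y * phi x y k).
Proof.
  destruct x as [x0 x1], y as [y0 y1]; intros HA HL.
  unfold Ff, phi, Aq, sqn, dot in *; destruct k; simpl in *; dsolve HA.
Qed.

Lemma dy_phi x y l k : 0 < Aq x y -> 1 - sqn x <> 0 ->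
  is_derive (fun s => phi x (upd y k s) l) (coord y k) (rho x y * zz y l * zz y k).
Proof.
  destruct x as [x0 x1], y as [y0 y1]; intros HA HL.
  unfold rho, zz, phi, Aq, sqn, dot in *; destruct k, l; simpl in *; dsolve HA.
Qed.

Lemma dx_phi x y l k : 0 < Aq x y -> 1 - sqn x <> 0 ->
  is_derive (fun s => phi (upd x k s) y l) (coord x k)
   (phi x y l * phi x y k + Ff x y * (rho x y * zz y l * zz y k)).
Proof.
  destruct x as [x0 x1], y as [y0 y1]; intros HA HL.
  unfold Ff, rho, zz, phi, Aq, sqn, dot in *; destruct k, l; simpl in *; dsolve HA.
Qed.

Lemma dy_bet a x y k : 1 + dot (a,0) x <> 0 ->
  is_derive (fun s => bet a x (upd y k s)) (coord y k) (bb a x k).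
Proof.
  destruct x as [x0 x1], y as [y0 y1]; intros HB.
  unfold bet, bb, dot in *; destruct k; simpl in *;
  auto_derive; sidec; field; sidec.
Qed.

Lemma dx_bet a x y k : 1 + dot (a,0) x <> 0 ->
  is_derive (fun s => bet a (upd x k s) y) (coord x k) (- bb a x k * bet a x y).
Proof.
  destruct x as [x0 x1], y as [y0 y1]; intros HB.
  unfold bet, bb, dot in *; destruct k; simpl in *;
  auto_derive; sidec; field; sidec.
Qed.

Lemma dx_bb a x l k : 1 + dot (a,0) x <> 0 ->
  is_derive (fun s => bb a (upd x k s) l) (coord x k) (- bb a x k * bb a x l).
Proof.
  destruct x as [x0 x1]; intros HB.
  unfold bb, dot in *; destruct k, l; simpl in *;
  auto_derive; sidec; field; sidec.
Qed.

Lemma ex_dx_rho x y k : 0 < Aq x y ->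
  ex_derive (fun s => rho (upd x k s) y) (coord x k).
Proof.
  destruct x as [x0 x1], y as [y0 y1]; intros HA.
  unfold rho, Aq, sqn, dot in *; destruct k; simpl in *;
  pose proof (sqrt_lt_R0 _ HA) as Hp; auto_derive; unfold Rminus in *; sidec.
Qed.

Lemma euler_phi x y : 0 < Aq x y -> 1 - sqn x <> 0 ->
  phi x y 0 * fst y + phi x y 1 * snd y = Ff x y.
Proof.
  destruct x as [x0 x1], y as [y0 y1]; intros HA HL.
  unfold Ff, phi, Aq, sqn, dot in *; simpl in *.
  pose proof (sqrt_sq_rel _ HA) as Hr; pose proof (sqrt_lt_R0 _ HA) as Hp.
  field [Hr]; sidec.
Qed.

Lemma euler_bb a x y : 1 + dot (a,0) x <> 0 ->
  bb a x 0 * fst y + bb a x 1 * snd y = bet a x y.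
Proof.
  destruct x as [x0 x1], y as [y0 y1]; intros HB.
  unfold bet, bb, dot in *; simpl in *. field; sidec.
Qed.
Definition Ux a (x : R*R) := sqn x < ((1 - Rabs a)/4)^2.
Definition FF a x y := Ff x y + bet a x y.

Lemma poly_bound (X e : R) : 0 <= X -> X < e/4 -> 0 < e <= 1 ->
  0 < (1 - X*X - X) * (1 - (1-e)*X) - (1-e) * (1 - X*X).
Proof.
  intros H0 H1 H2.
  assert (HX2 : X*X <= 1/16) by nra.
  assert (Hq : e - (1-e)*X >= 3*e/4) by nra.
  replace ((1 - X*X - X) * (1 - (1-e)*X) - (1-e) * (1 - X*X))
    with ((1 - X*X)*(e - (1-e)*X) - X + (1-e)*X*X) by ring.
  assert (0 <= (1-e)*X*X) by (apply Rmult_le_pos; [apply Rmult_le_pos|]; lra).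
  assert ((1 - X*X)*(e - (1-e)*X) >= (15/16)*(3*e/4)) by nra.
  lra.
Qed.

Lemma U_facts a x y : Rabs a < 1 -> Ux a x -> 0 < sqn y ->
  0 < 1 - sqn x /\ 0 < Aq x y /\ 0 < 1 + dot (a,0) x /\ 0 < FF a x y.
Proof.
  intros Ha Hx Hy. unfold Ux in Hx.
  set (e := 1 - Rabs a) in *.
  assert (He : 0 < e <= 1) by (unfold e; pose proof (Rabs_pos a); lra).
  destruct x as [x0 x1], y as [y0 y1]. unfold sqn, dot in *; simpl in *.
  assert (Hsx : 0 <= x0*x0+x1*x1) by nra.
  set (X := sqrt (x0*x0+x1*x1)).
  assert (HX0 : 0 <= X) by apply sqrt_pos.
  assert (HX2 : X*X = x0*x0+x1*x1) by (apply sqrt_sqrt; lra).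
  assert (HXe : X < e/4).
  { apply Rsqr_incrst_0; try lra. unfold Rsqr. rewrite HX2. nra. }
  assert (HL : 0 < 1 - (x0*x0+x1*x1)) by nra.
  set (Y := sqrt (y0*y0+y1*y1)).
  assert (HY0 : 0 < Y) by (apply sqrt_lt_R0; lra).
  assert (HY2 : Y*Y = y0*y0+y1*y1) by (apply sqrt_sqrt; lra).
  assert (HA : 0 < Aq (x0,x1) (y0,y1)).
  { unfold Aq, sqn, dot; simpl.
    assert (0 < (1 - (x0*x0+x1*x1)) * (y0*y0+y1*y1)) by (apply Rmult_lt_0_compat; lra).
    assert (0 <= (x0*y0+x1*y1)*(x0*y0+x1*y1)) by apply Rle_0_sqr. lra. }
  assert (Hax : Rabs (a*x0) <= (1-e) * X).
  { rewrite Rabs_mult. unfold e. replace (1 - (1 - Rabs a)) with (Rabs a) by ring.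
    apply Rmult_le_compat_l; [apply Rabs_pos|].
    apply Rsqr_incr_0_var; [|lra]. unfold Rsqr. rewrite HX2.
    rewrite <- Rabs_mult. rewrite Rabs_right; nra. }
  assert (HB : 1 - (1-e)*X <= 1 + (a*x0 + 0*x1)).
  { 
    destruct (Rabs_le_between (a*x0) ((1-e)*X)) as [H1 _]. nra. }
  assert (HB0 : 0 < 1 - (1-e)*X) by nra.
  split; [exact HL|]. split; [exact HA|]. split; [simpl; lra|].
  unfold FF, Ff, bet, Aq, sqn, dot in *; simpl in *.
  set (r := sqrt _).
  assert (Hr2 : r * r = y0 * y0 + y1 * y1 - ((x0 * x0 + x1 * x1) * (y0 * y0 + y1 * y1) - (x0 * y0 + x1 * y1) ^ 2)).
  { apply sqrt_sqrt. simpl. lra. }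
  assert (Hr0 : 0 <= r) by apply sqrt_pos.
  set (L := 1 - (x0*x0+x1*x1)) in *.
  set (d := x0*y0+x1*y1).
  assert (Hd : - (X*Y) <= d).
  { assert (d*d <= (X*Y)*(X*Y)).
    { replace ((X*Y)*(X*Y)) with ((X*X)*(Y*Y)) by ring. rewrite HX2, HY2. unfold d. assert (0 <= (x0*y1 - x1*y0)*(x0*y1-x1*y0)) by apply Rle_0_sqr. lra. }
    assert (0 <= X*Y) by (apply Rmult_le_pos; lra). destruct (Rle_or_lt (-(X*Y)) d) as [|Hlt]; [assumption|]. nra. }
  assert (Hr : L * Y <= r).
  { apply Rsqr_incr_0_var; [|lra]. unfold Rsqr. rewrite Hr2.
    replace (L*Y*(L*Y)) with (L*L*(Y*Y)) by ring. rewrite HY2.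
    assert (Hsy : 0 <= y0*y0+y1*y1) by nra.
    assert (HL1 : L <= 1) by (unfold L; lra).
    assert (L*L*(y0*y0+y1*y1) <= L*(y0*y0+y1*y1)).
    { apply Rmult_le_compat_r; [lra|]. nra. }
    assert (0 <= d*d) by apply Rle_0_sqr.
    replace ((x0 * x0 + x1 * x1) * (y0 * y0 + y1 * y1)) with ((1 - L) * (y0 * y0 + y1 * y1)) by (unfold L; ring).
    fold d. simpl. lra. }
  assert (Hy0 : Rabs y0 <= Y).
  { apply Rsqr_incr_0_var; [|lra]. unfold Rsqr. rewrite HY2.
    rewrite <- Rabs_mult. rewrite Rabs_right; nra. }
  assert (Hay : - ((1-e)*Y) <= a*y0 + 0*y1).
  { replace (a*y0+0*y1) with (a*y0) by ring.
    assert (Rabs (a*y0) <= (1-e)*Y).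
    { rewrite Rabs_mult. unfold e. replace (1 - (1 - Rabs a)) with (Rabs a) by ring.
      apply Rmult_le_compat_l; [apply Rabs_pos|lra]. }
    destruct (Rabs_le_between (a*y0) ((1-e)*Y)) as [H1 _]. lra. }
  set (B := 1 + (a*x0+0*x1)) in *.
  assert (HLX : L - X >= 0) by (unfold L; rewrite <- HX2; nra).
  assert (Hmain : 0 < (r + d) * B + (a*y0+0*y1) * L).
  { assert (H1 : (L - X) * Y <= r + d) by lra.
    assert (H0 : 0 <= (L - X) * Y) by (apply Rmult_le_pos; lra).
    assert (H2 : (L - X) * Y * (1 - (1-e)*X) <= (r + d) * B).
    { assert (0 <= (r+d)*(B - (1-(1-e)*X))) by (apply Rmult_le_pos; lra).
      assert (0 <= ((r+d)-(L-X)*Y)*(1-(1-e)*X)) by (apply Rmult_le_pos; lra).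
      lra. }
    assert (H3 : - ((1-e)*Y) * L <= (a*y0+0*y1) * L) by (apply Rmult_le_compat_r; lra).
    pose proof (poly_bound X e HX0 HXe He) as HP.
    replace (1 - X*X - X) with (L - X) in HP by (unfold L; rewrite <- HX2; ring).
    replace (1 - X*X) with L in HP by (unfold L; rewrite <- HX2; ring).
    assert (H4 : 0 < Y * ((L - X) * (1 - (1 - e) * X) - (1 - e) * L)) by (apply Rmult_lt_0_compat; lra).
    lra. }
  assert (HLB : 0 < L * B) by nra.
  replace (r / L + d / L + (a * y0 + 0 * y1) / B) with (((r + d) * B + (a*y0+0*y1) * L) / (L*B)) by (field; lra).
  apply Rdiv_lt_0_compat; lra.
Qed.

Lemma dVal (f : R -> R) x l1 l2 : is_derive f x l1 -> l1 = l2 -> is_derive f x l2.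
Proof. intros H ->; exact H. Qed.
Lemma dPlus (f g : R -> R) x a b : is_derive f x a -> is_derive g x b ->
  is_derive (fun t => f t + g t) x (a + b).
Proof. intros; apply (is_derive_plus f g); auto. Qed.
Lemma dMinus (f g : R -> R) x a b : is_derive f x a -> is_derive g x b ->
  is_derive (fun t => f t - g t) x (a - b).
Proof. intros; apply (is_derive_minus f g); auto. Qed.
Lemma dMult (f g : R -> R) x a b : is_derive f x a -> is_derive g x b ->
  is_derive (fun t => f t * g t) x (a * g x + f x * b).
Proof. intros; apply (is_derive_mult f g); auto. intros; apply Rmult_comm. Qed.
Lemma dOpp (f : R -> R) x a : is_derive f x a -> is_derive (fun t => - f t) x (- a).
Proof. intros; apply (is_derive_opp f); auto. Qed.
Lemma dConst (c : R) x : is_derive (fun _ => c) x 0.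
Proof. apply (is_derive_const c). Qed.
Lemma dDivc (f : R -> R) x a c : is_derive f x a -> is_derive (fun t => f t / c) x (a / c).
Proof. intros H. unfold Rdiv. apply (dVal (fun t => f t * / c) x (a * / c + f x * 0)).
  apply (dMult f (fun _ => / c)); [exact H| apply dConst]. match goal with |- ?A = ?B => change (@eq R A B) end; ring. Qed.


Ltac dstep := lazymatch goal with
  | |- is_derive (fun _ => ?c) _ _ => apply dConst
  | |- is_derive (fun s => _ + _) _ _ => apply dPlus
  | |- is_derive (fun s => _ - _) _ _ => apply dMinus
  | |- is_derive (fun s => _ * _) _ _ => apply dMult
  | |- is_derive (fun s => - _) _ _ => apply dOpp
  | |- is_derive (fun s => _ / ?c) _ _ => apply dDivc
  | |- _ => eassumption
  end.
Lemma upd_coord (y : R*R) j : upd y j (coord y j) = y.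
Proof. destruct y, j; reflexivity. Qed.
Ltac req := match goal with |- ?A = ?B => change (@eq R A B) end; cbv beta; rewrite ?upd_coord.
Ltac dtac := eapply dVal; [ repeat dstep | req ].

Definition kd (i j : nat) : R := match i, j with O, O => 1 | S _, S _ => 1 | _, _ => 0 end.

Lemma dcoord y i j : is_derive (fun s => coord (upd y j s) i) (coord y j) (kd i j).
Proof. destruct y, i, j; simpl; auto_derive; auto; ring. Qed.

Definition F1 a x y l := phi x y l + bb a x l.
Definition Hs x y l k := rho x y * zz y l * zz y k.
Definition Pc a x y := (Ff x y - bet a x y) / 2.
Definition P1 a x y j := (phi x y j - bb a x j) / 2.
Definition Fx a x y k := Ff x y * phi x y k - bb a x k * bet a x y.
Definition F1x a x y l k := phi x y l * phi x y k + Ff x y * Hs x y l k - bb a x k * bb a x l.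

Definition U a x y := Ux a x /\ 0 < sqn y.

Definition Px a x y k := (Ff x y * phi x y k + bb a x k * bet a x y) / 2.
Definition P1x a x y j k := (phi x y j * phi x y k + Ff x y * Hs x y j k + bb a x j * bb a x k) / 2.

Section Der.
Variables (a : R) (Ha : Rabs a < 1) (x y : R*R) (HU : U a x y).

Let facts := U_facts a x y Ha (proj1 HU) (proj2 HU).

Ltac prims := destruct facts as (HL & HA & HB & HF);
  let HL' := fresh in assert (HL' : 1 - sqn x <> 0) by lra;
  let HB' := fresh in assert (HB' : 1 + dot (a,0) x <> 0) by lra;
  repeat match goal with
  | k : nat |- _ => lazymatch goal with
     | H : is_derive (fun s => Ff x (upd y k s)) _ _ |- _ => fail
     | _ => pose proof (dy_Ff x y k HA HL'); pose proof (dx_Ff x y k HA HL');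
            pose proof (dy_bet a x y k HB'); pose proof (dx_bet a x y k HB')
     end
  end;
  repeat match goal with
  | l : nat, k : nat |- _ => lazymatch goal with
     | H : is_derive (fun s => phi x (upd y k s) l) _ _ |- _ => fail
     | _ => pose proof (dy_phi x y l k HA HL'); pose proof (dx_phi x y l k HA HL');
            pose proof (dx_bb a x l k HB')
     end
  end.

Lemma dyFF k : is_derive (fun s => FF a x (upd y k s)) (coord y k) (F1 a x y k).
Proof. prims. unfold FF, F1; dtac. unfold bb; ring. Qed.

Lemma dyF1 l k : is_derive (fun s => F1 a x (upd y k s) l) (coord y k) (Hs x y l k).
Proof. prims. unfold F1; dtac. unfold Hs; ring. Qed.

Lemma dyPc k : is_derive (fun s => Pc a x (upd y k s)) (coord y k) (P1 a x y k).
Proof. prims. unfold Pc; dtac. unfold P1; ring. Qed.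

Lemma dyP1 j k : is_derive (fun s => P1 a x (upd y k s) j) (coord y k) (Hs x y j k / 2).
Proof. prims. unfold P1; dtac. unfold Hs; field. Qed.

Lemma dxFF k : is_derive (fun s => FF a (upd x k s) y) (coord x k) (Fx a x y k).
Proof. prims. unfold FF, Fx; dtac. ring. Qed.

Lemma dxF1 l k : is_derive (fun s => F1 a (upd x k s) y l) (coord x k) (F1x a x y l k).
Proof. prims. unfold F1, F1x; dtac. unfold Hs; ring. Qed.

Lemma dxPc k : is_derive (fun s => Pc a (upd x k s) y) (coord x k) (Px a x y k).
Proof. prims. unfold Pc, Px; dtac. field. Qed.

Lemma dxP1 j k : is_derive (fun s => P1 a (upd x k s) y j) (coord x k) (P1x a x y j k).
Proof. prims. unfold P1, P1x; dtac. unfold Hs; field. Qed.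

Lemma dxrho k : is_derive (fun s => rho (upd x k s) y) (coord x k) (Derive (fun s => rho (upd x k s) y) (coord x k)).
Proof. destruct facts as (HL & HA & HB & HF). apply Derive_correct. apply ex_dx_rho; auto. Qed.

End Der.


Lemma loc_pos (f : R -> R) s0 : ex_derive f s0 -> 0 < f s0 -> locally s0 (fun s => 0 < f s).
Proof.
  intros Hd Hp. pose proof (ex_derive_continuous f s0 Hd) as Hc.
  exact (Hc (fun u => 0 < u) (open_gt 0 (f s0) Hp)).
Qed.

Lemma loc_y a x y k : U a x y -> locally (coord y k) (fun s => U a x (upd y k s)).
Proof.
  intros [Hx Hy].
  assert (H : locally (coord y k) (fun s => 0 < sqn (upd y k s))).
  { apply (loc_pos (fun s => sqn (upd y k s))).
    - destruct y, k; unfold sqn, dot; simpl; auto_derive; auto.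
    - destruct y, k; simpl; exact Hy. }
  apply (filter_imp _ _ (fun s Hs => conj Hx Hs) H).
Qed.

Lemma loc_x a x y k : U a x y -> locally (coord x k) (fun s => U a (upd x k s) y).
Proof.
  intros [Hx Hy]. unfold Ux in Hx.
  assert (H : locally (coord x k) (fun s => 0 < ((1 - Rabs a)/4)^2 - sqn (upd x k s))).
  { apply (loc_pos (fun s => ((1 - Rabs a)/4)^2 - sqn (upd x k s))).
    - destruct x, k; unfold sqn, dot; simpl; auto_derive; auto.
    - destruct x, k; simpl in *; lra. }
  revert H; apply filter_imp; intros s Hs; split; [unfold Ux; lra | exact Hy].
Qed.

Definition gcl a x y i j := F1 a x y i * F1 a x y j + FF a x y * Hs x y i j.

Lemma dY_Esq a x y j : Rabs a < 1 -> U a x y ->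
  dY j (Esq a) x y = 2 * FF a x y * F1 a x y j.
Proof.
  intros Ha HU. unfold dY. apply is_derive_unique.
  change (is_derive (fun s => FF a x (upd y j s) ^ 2) (coord y j) (2 * FF a x y * F1 a x y j)).
  eapply dVal. apply is_derive_pow. apply dyFF; auto.
  req. simpl. rewrite ?upd_coord. ring.
Qed.

Lemma gm_eq a x y i j : Rabs a < 1 -> U a x y -> gm a i j x y = gcl a x y i j.
Proof.
  intros Ha HU. unfold gm. unfold dY at 1.
  rewrite (Derive_ext_loc _ (fun s => 2 * FF a x (upd y i s) * F1 a x (upd y i s) j)).
  - rewrite (is_derive_unique _ _ (2 * (F1 a x y i * F1 a x y j + FF a x y * Hs x y j i))).
    + unfold gcl, Hs. field.
    + pose proof (dyFF a Ha x y HU i). pose proof (dyF1 a Ha x y HU j i).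
      dtac. ring.
  - apply (filter_imp _ _ (fun s Hs => dY_Esq a x (upd y i s) j Ha Hs) (loc_y a x y i HU)).
Qed.

Definition Dg a x y j l k := F1x a x y j k * F1 a x y l + F1 a x y j * F1x a x y l k
  + Fx a x y k * Hs x y j l
  + FF a x y * (Derive (fun s => rho (upd x k s) y) (coord x k) * zz y j * zz y l).

Lemma dXgm a x y j l k : Rabs a < 1 -> U a x y -> dX k (gm a j l) x y = Dg a x y j l k.
Proof.
  intros Ha HU. unfold dX.
  rewrite (Derive_ext_loc _ (fun s => gcl a (upd x k s) y j l)).
  - apply is_derive_unique. unfold gcl, Hs.
    pose proof (dxF1 a Ha x y HU j k). pose proof (dxF1 a Ha x y HU l k).
    pose proof (dxFF a Ha x y HU k). pose proof (dxrho a Ha x y HU k).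
    dtac. unfold Dg, Hs; ring.
  - apply (filter_imp _ _ (fun s Hs => gm_eq a (upd x k s) y j l Ha Hs) (loc_x a x y k HU)).
Qed.

Lemma euler_F a x y : Rabs a < 1 -> U a x y ->
  Ff x y = phi x y 0 * fst y + phi x y 1 * snd y /\ bet a x y = bb a x 0 * fst y + bb a x 1 * snd y.
Proof.
  intros Ha HU. destruct (U_facts a x y Ha (proj1 HU) (proj2 HU)) as (HL & HA & HB & _).
  split; symmetry; [apply euler_phi | apply euler_bb]; lra.
Qed.

Lemma Klem a x y l : Rabs a < 1 -> U a x y ->
  sum2 (fun j => sum2 (fun k => (2 * dX k (gm a j l) x y - dX l (gm a j k) x y) * coord y j * coord y k))
  = 4 * Pc a x y * (gcl a x y l 0 * coord y 0 + gcl a x y l 1 * coord y 1).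
Proof.
  intros Ha HU. destruct (euler_F a x y Ha HU) as [E1 E2].
  unfold sum2. repeat rewrite (dXgm a x y _ _ _ Ha HU).
  unfold Dg, gcl, F1x, F1, Fx, Hs, Pc, FF. rewrite E1, E2.
  destruct y as [y0 y1]; simpl. destruct l; simpl; field.
Qed.

Lemma gdet_eq a x y : Rabs a < 1 -> U a x y ->
  gcl a x y 0 0 * gcl a x y 1 1 - gcl a x y 0 1 * gcl a x y 1 0 = FF a x y ^ 3 * rho x y.
Proof.
  intros Ha HU. destruct (euler_F a x y Ha HU) as [E1 E2].
  unfold gcl, F1, Hs, FF. rewrite E1, E2. destruct y as [y0 y1]; simpl. ring.
Qed.

Lemma Gc_eq a x y i : Rabs a < 1 -> U a x y -> Gc a i x y = Pc a x y * coord y i.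
Proof.
  intros Ha HU. unfold Gc. unfold sum2 at 1. cbv beta.
  rewrite (Klem a x y 0 Ha HU), (Klem a x y 1 Ha HU).
  assert (Hd : gcl a x y 0 0 * gcl a x y 1 1 - gcl a x y 0 1 * gcl a x y 1 0 <> 0).
  { rewrite (gdet_eq a x y Ha HU).
    destruct (U_facts a x y Ha (proj1 HU) (proj2 HU)) as (HL & HA & HB & HF).
    apply Rmult_integral_contrapositive_currified. apply pow_nonzero; lra.
    unfold rho. apply Rinv_neq_0_compat. apply pow_nonzero.
    pose proof (sqrt_lt_R0 _ HA); lra. }
  unfold ginv, gdet. repeat rewrite (gm_eq a x y _ _ Ha HU).
  destruct i; simpl; req; field; exact Hd.
Qed.

Definition P2 x y j k := Hs x y j k / 2.

Lemma G1_eq a x y i j : Rabs a < 1 -> U a x y ->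
  G1 a i j x y = P1 a x y j * coord y i + Pc a x y * kd i j.
Proof.
  intros Ha HU. unfold G1, dY.
  rewrite (Derive_ext_loc _ (fun s => Pc a x (upd y j s) * coord (upd y j s) i)).
  - apply is_derive_unique.
    pose proof (dyPc a Ha x y HU j). pose proof (dcoord y i j).
    dtac. ring.
  - apply (filter_imp _ _ (fun s Hs => Gc_eq a x (upd y j s) i Ha Hs) (loc_y a x y j HU)).
Qed.

Lemma G2_eq a x y i j k : Rabs a < 1 -> U a x y ->
  G2 a i j k x y = P2 x y j k * coord y i + P1 a x y j * kd i k + P1 a x y k * kd i j.
Proof.
  intros Ha HU. unfold G2. unfold dY at 1.
  rewrite (Derive_ext_loc _ (fun s => P1 a x (upd y k s) j * coord (upd y k s) i + Pc a x (upd y k s) * kd i j)).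
  - apply is_derive_unique.
    pose proof (dyPc a Ha x y HU k). pose proof (dcoord y i k). pose proof (dyP1 a Ha x y HU j k).
    dtac. unfold P2; ring.
  - apply (filter_imp _ _ (fun s Hs => G1_eq a x (upd y k s) i j Ha Hs) (loc_y a x y k HU)).
Qed.

Lemma dXG1_eq a x y i j k : Rabs a < 1 -> U a x y ->
  dX k (G1 a i j) x y = P1x a x y j k * coord y i + Px a x y k * kd i j.
Proof.
  intros Ha HU. unfold dX.
  rewrite (Derive_ext_loc _ (fun s => P1 a (upd x k s) y j * coord y i + Pc a (upd x k s) y * kd i j)).
  - apply is_derive_unique.
    pose proof (dxPc a Ha x y HU k). pose proof (dxP1 a Ha x y HU j k).
    dtac. ring.
  - apply (filter_imp _ _ (fun s Hs => G1_eq a (upd x k s) y i j Ha Hs) (loc_x a x y k HU)).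
Qed.

Definition xic a x y i := FF a x y / 4 * (kd i 0 * F1 a x y 1 - kd i 1 * F1 a x y 0).

Lemma Rc01_eq a x y i : Rabs a < 1 -> U a x y -> Rc a i 0 1 x y = xic a x y i.
Proof.
  intros Ha HU. destruct (euler_F a x y Ha HU) as [E1 E2].
  unfold Rc, sum2. rewrite !(dXG1_eq a x y _ _ _ Ha HU), !(G1_eq a x y _ _ Ha HU), !(G2_eq a x y _ _ _ Ha HU).
  unfold xic, P1x, Px, P1, P2, Pc, Hs, F1, FF. rewrite E1, E2.
  destruct y as [y0 y1]; destruct i as [|[|i]]; simpl; req; field.
Qed.

Definition ev (m : nat) : R*R -> R*R := fun _ => (kd m 0, kd m 1).
Definition xiA a : vfield := curv a (ev 0) (ev 1).

Lemma xiA_eq a i x y : xiA a i x y = Rc a i 0 1 x y.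
Proof. unfold xiA, curv, sum2, ev; simpl. ring. Qed.

Lemma xiA_U a x y i : Rabs a < 1 -> U a x y -> xiA a i x y = xic a x y i.
Proof. intros. rewrite xiA_eq. apply Rc01_eq; auto. Qed.

Definition dxxi a x y i j := Fx a x y j / 4 * (kd i 0 * F1 a x y 1 - kd i 1 * F1 a x y 0)
  + FF a x y / 4 * (kd i 0 * F1x a x y 1 j - kd i 1 * F1x a x y 0 j).
Definition dyxi a x y i k := F1 a x y k / 4 * (kd i 0 * F1 a x y 1 - kd i 1 * F1 a x y 0)
  + FF a x y / 4 * (kd i 0 * Hs x y 1 k - kd i 1 * Hs x y 0 k).

Lemma dxic_x a x y i j : Rabs a < 1 -> U a x y ->
  is_derive (fun s => xic a (upd x j s) y i) (coord x j) (dxxi a x y i j).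
Proof.
  intros Ha HU. unfold xic.
  pose proof (dxFF a Ha x y HU j). pose proof (dxF1 a Ha x y HU 1 j). pose proof (dxF1 a Ha x y HU 0 j).
  dtac. unfold dxxi. ring.
Qed.

Lemma dxic_y a x y i k : Rabs a < 1 -> U a x y ->
  is_derive (fun s => xic a x (upd y k s) i) (coord y k) (dyxi a x y i k).
Proof.
  intros Ha HU. unfold xic.
  pose proof (dyFF a Ha x y HU k). pose proof (dyF1 a Ha x y HU 1 k). pose proof (dyF1 a Ha x y HU 0 k).
  dtac. unfold dyxi. ring.
Qed.

Lemma dX_xiA a x y i j : Rabs a < 1 -> U a x y -> dX j (xiA a i) x y = dxxi a x y i j.
Proof.
  intros Ha HU. unfold dX.
  rewrite (Derive_ext_loc _ (fun s => xic a (upd x j s) y i)).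
  - apply is_derive_unique. apply dxic_x; auto.
  - apply (filter_imp _ _ (fun s Hs => xiA_U a (upd x j s) y i Ha Hs) (loc_x a x y j HU)).
Qed.

Lemma dY_xiA a x y i k : Rabs a < 1 -> U a x y -> dY k (xiA a i) x y = dyxi a x y i k.
Proof.
  intros Ha HU. unfold dY.
  rewrite (Derive_ext_loc _ (fun s => xic a x (upd y k s) i)).
  - apply is_derive_unique. apply dxic_y; auto.
  - apply (filter_imp _ _ (fun s Hs => xiA_U a x (upd y k s) i Ha Hs) (loc_y a x y k HU)).
Qed.


Set Keyed Unification.
Lemma nabla_eq a x y i m : Rabs a < 1 -> U a x y -> (m < 2)%nat ->
  nabla a (ev m) (xiA a) i x y = 3 * P1 a x y m * xic a x y i.
Proof.
  intros Ha HU Hm. destruct (euler_F a x y Ha HU) as [E1 E2].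
  unfold nabla, sum2. rewrite !(dX_xiA a x y _ _ Ha HU). rewrite !(dY_xiA a x y _ _ Ha HU).
   rewrite !(G1_eq a x y _ _ Ha HU). rewrite !(G2_eq a x y _ _ _ Ha HU). rewrite !(xiA_U a x y _ Ha HU).
  unfold dxxi, dyxi, xic, ev, Fx, F1x, P1, P2, Pc, Hs, F1, FF. rewrite E1, E2.
  destruct y as [y0 y1]; destruct i as [|[|i]]; destruct m as [|[|m]]; try lia; simpl; req.
  all: field.
Qed.

Definition eta a m : vfield := nabla a (ev m) (xiA a).

Lemma eta_U a x y i m : Rabs a < 1 -> U a x y -> (m < 2)%nat ->
  eta a m i x y = 3 * P1 a x y m * xic a x y i.
Proof. intros. apply nabla_eq; auto. Qed.

Lemma dX_eta a x y i m n : Rabs a < 1 -> U a x y -> (m < 2)%nat ->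
  dX n (eta a m i) x y = 3 * (P1x a x y m n * xic a x y i + P1 a x y m * dxxi a x y i n).
Proof.
  intros Ha HU Hm. unfold dX.
  rewrite (Derive_ext_loc _ (fun s => 3 * P1 a (upd x n s) y m * xic a (upd x n s) y i)).
  - apply is_derive_unique.
    pose proof (dxP1 a Ha x y HU m n). pose proof (dxic_x a x y i n Ha HU).
    dtac. ring.
  - apply (filter_imp _ _ (fun s Hs => eta_U a (upd x n s) y i m Ha Hs Hm) (loc_x a x y n HU)).
Qed.

Lemma dY_eta a x y i m n : Rabs a < 1 -> U a x y -> (m < 2)%nat ->
  dY n (eta a m i) x y = 3 * (P2 x y m n * xic a x y i + P1 a x y m * dyxi a x y i n).
Proof.
  intros Ha HU Hm. unfold dY.
  rewrite (Derive_ext_loc _ (fun s => 3 * P1 a x (upd y n s) m * xic a x (upd y n s) i)).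
  - apply is_derive_unique.
    pose proof (dyP1 a Ha x y HU m n). pose proof (dxic_y a x y i n Ha HU).
    dtac. unfold P2. ring.
  - apply (filter_imp _ _ (fun s Hs => eta_U a x (upd y n s) i m Ha Hs Hm) (loc_y a x y n HU)).
Qed.

Definition Cc a x y j k := 3/4 * (F1 a x y j * F1 a x y k + FF a x y * Hs x y j k) + 12 * P1 a x y j * P1 a x y k.

Lemma nabla2_eq a x y i m k : Rabs a < 1 -> U a x y -> (m < 2)%nat -> (k < 2)%nat ->
  nabla a (ev k) (eta a m) i x y = Cc a x y m k * xic a x y i.
Proof.
  intros Ha HU Hm Hk. destruct (euler_F a x y Ha HU) as [E1 E2].
  unfold nabla at 1, sum2. rewrite !(dX_eta a x y _ _ _ Ha HU Hm), !(dY_eta a x y _ _ _ Ha HU Hm),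
    !(G1_eq a x y _ _ Ha HU), !(G2_eq a x y _ _ _ Ha HU), !(eta_U a x y _ _ Ha HU Hm).
  unfold Cc, dxxi, dyxi, xic, ev, Fx, F1x, P1x, P1, P2, Pc, Hs, F1, FF. rewrite E1, E2.
  destruct y as [y0 y1]; destruct i as [|[|i]]; destruct m as [|[|m]]; destruct k as [|[|k]]; try lia; simpl; req.
  all: field.
Qed.


Lemma pder_const (c : R) l : forall p, pder l (fun _ => c) p = match l with nil => c | _ => 0 end.
Proof.
  induction l as [|j l IH]; intros p; simpl; [reflexivity|].
  rewrite (Derive_ext _ (fun _ => match l with nil => c | _ => 0 end)).
  - apply Derive_const.
  - intros t; apply IH.
Qed.

Lemma smooth_const (c : R) : smooth_on_disk (fun _ => c).
Proof.
  intros l p _. split.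
  - apply (continuous_ext (fun _ => match l with nil => c | _ => 0 end)).
    + intros q; symmetry; apply pder_const.
    + apply continuous_const.
  - intros j. apply (ex_derive_ext (fun _ => match l with nil => c | _ => 0 end)).
    + intros t; symmetry; apply pder_const.
    + apply ex_derive_const.
Qed.

Lemma smooth_ev m : smooth_vf (ev m).
Proof. split; [change (smooth_on_disk (fun _ => kd m 0)) | change (smooth_on_disk (fun _ => kd m 1))]; apply smooth_const. Qed.

Lemma hol_xiA a : hol a (xiA a).
Proof. exact (hol_curv a (ev 0) (ev 1) (smooth_ev 0) (smooth_ev 1)). Qed.

Lemma hol_eta a m : hol a (eta a m).
Proof. exact (hol_nabla a (ev m) (xiA a) (smooth_ev m) (hol_xiA a)). Qed.

Lemma hol_eta2 a m k : hol a (nabla a (ev k) (eta a m)).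
Proof. exact (hol_nabla a (ev k) (eta a m) (smooth_ev k) (hol_eta a m)). Qed.

Definition x0 : R*R := (0,0).

Lemma U0 a y : Rabs a < 1 -> 0 < sqn y -> U a x0 y.
Proof.
  intros Ha Hy. split; auto. unfold Ux, x0, sqn, dot; simpl.
  assert (0 < 1 - Rabs a) by lra.
  assert (0 < ((1 - Rabs a)/4)^2) by (apply pow_lt; lra). lra.
Qed.

Definition Shol a (h : R*R -> R) := exists xi, hol a xi /\
  forall y, 0 < sqn y -> forall i, xi i x0 y = h y * xic a x0 y i.

Lemma S_ext a h1 h2 : Shol a h1 -> (forall y, 0 < sqn y -> h1 y = h2 y) -> Shol a h2.
Proof.
  intros [xi [Hh Hx]] He. exists xi; split; auto.
  intros y Hy i. rewrite Hx, He; auto.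
Qed.

Lemma S_lin a h1 h2 c1 c2 : Shol a h1 -> Shol a h2 -> Shol a (fun y => c1 * h1 y + c2 * h2 y).
Proof.
  intros [xi1 [H1 E1]] [xi2 [H2 E2]].
  exists (fun i x y => (fun i x y => c1 * xi1 i x y) i x y + (fun i x y => c2 * xi2 i x y) i x y).
  split.
  - apply hol_add; apply hol_scal; auto.
  - intros y Hy i. cbv beta. rewrite E1, E2; auto. ring.
Qed.

Lemma S_one a : Rabs a < 1 -> Shol a (fun _ => 1).
Proof.
  intros Ha. exists (xiA a); split; [apply hol_xiA|].
  intros y Hy i. rewrite xiA_U; auto using U0. ring.
Qed.

Lemma S_eta a m : Rabs a < 1 -> (m < 2)%nat -> Shol a (fun y => 3 * P1 a x0 y m).
Proof.
  intros Ha Hm. exists (eta a m); split; [apply hol_eta|].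
  intros y Hy i. apply eta_U; auto using U0.
Qed.

Lemma S_eta2 a m k : Rabs a < 1 -> (m < 2)%nat -> (k < 2)%nat -> Shol a (fun y => Cc a x0 y m k).
Proof.
  intros Ha Hm Hk. exists (nabla a (ev k) (eta a m)); split; [apply hol_eta2|].
  intros y Hy i. apply nabla2_eq; auto using U0.
Qed.

Lemma loc_y0 y k : 0 < sqn y -> locally (coord y k) (fun s => 0 < sqn (upd y k s)).
Proof.
  intros Hy. apply (loc_pos (fun s => sqn (upd y k s))).
  - destruct y, k; unfold sqn, dot; simpl; auto_derive; auto.
  - destruct y, k; simpl; exact Hy.
Qed.

Lemma S_br a h1 h2 d1 d2 : Rabs a < 1 -> Shol a h1 -> Shol a h2 ->
  (forall y k, 0 < sqn y -> is_derive (fun s => h1 (upd y k s)) (coord y k) (d1 y k)) ->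
  (forall y k, 0 < sqn y -> is_derive (fun s => h2 (upd y k s)) (coord y k) (d2 y k)) ->
  Shol a (fun y => h1 y * sum2 (fun k => xic a x0 y k * d2 y k) - h2 y * sum2 (fun k => xic a x0 y k * d1 y k)).
Proof.
  intros Ha [xi1 [H1 E1]] [xi2 [H2 E2]] D1 D2.
  exists (vbracket xi1 xi2). split; [apply hol_bracket; auto|].
  intros y Hy i.
  assert (Hd : forall (xi : vfield) h d, (forall y, 0 < sqn y -> forall i, xi i x0 y = h y * xic a x0 y i) ->
     (forall y k, 0 < sqn y -> is_derive (fun s => h (upd y k s)) (coord y k) (d y k)) ->
     forall k, dY k (xi i) x0 y = d y k * xic a x0 y i + h y * dyxi a x0 y i k).
  { intros xi h d E D k. unfold dY.
    rewrite (Derive_ext_loc _ (fun s => h (upd y k s) * xic a x0 (upd y k s) i)).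
    - apply is_derive_unique. pose proof (D y k Hy). pose proof (dxic_y a x0 y i k Ha (U0 a y Ha Hy)).
      dtac. ring.
    - apply (filter_imp _ _ (fun s Hs => E (upd y k s) Hs i) (loc_y0 y k Hy)). }
  unfold vbracket, sum2. rewrite !(Hd xi1 h1 d1 E1 D1), !(Hd xi2 h2 d2 E2 D2).
  rewrite !E1, !E2; auto. ring.
Qed.


Definition nrm (y : R*R) := sqrt (sqn y).
Definition om (y : R*R) l := coord y l / nrm y.

Lemma nrm_pos y : 0 < sqn y -> 0 < nrm y.
Proof. intros; apply sqrt_lt_R0; auto. Qed.

Lemma nrm_sq y : 0 < sqn y -> nrm y * nrm y = sqn y.
Proof. intros; apply sqrt_sqrt; lra. Qed.

Lemma circle y : 0 < sqn y -> om y 1 * om y 1 = 1 - om y 0 * om y 0.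
Proof.
  intros Hy. pose proof (nrm_pos y Hy). pose proof (nrm_sq y Hy) as Hn.
  let y0 := fresh "y0" in let y1 := fresh "y1" in destruct y as [y0 y1]; unfold om, sqn, dot in *; simpl in *. field [Hn]. lra.
Qed.

Lemma Aq0 y : Aq x0 y = sqn y.
Proof. destruct y; unfold Aq, x0, sqn, dot; simpl; ring. Qed.

Ltac at0 y Hy := let Hn := fresh in let Hp := fresh in
  pose proof (nrm_pos _ Hy) as Hp; pose proof (nrm_sq _ Hy) as Hn;
  unfold xic, Cc, dyxi, P1, Hs, rho, FF, F1, Ff, phi, bet, bb; rewrite Aq0;
  unfold om, nrm in *; let y0 := fresh "y0" in let y1 := fresh "y1" in destruct y as [y0 y1]; unfold x0, sqn, dot, kd in *; simpl in *.

Lemma xic0 a y i : 0 < sqn y ->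
  xic a x0 y i = nrm y * (1 + a * om y 0) / 4 * (kd i 0 * om y 1 - kd i 1 * (om y 0 + a)).
Proof. intros Hy. at0 y Hy. destruct i as [|[|i]]; req; field [H]; lra. Qed.

Lemma P10 a y : 0 < sqn y -> P1 a x0 y 0 = (om y 0 - a) / 2.
Proof. intros Hy. at0 y Hy. req; field; lra. Qed.
Lemma P11 a y : 0 < sqn y -> P1 a x0 y 1 = om y 1 / 2.
Proof. intros Hy. at0 y Hy. req; field; lra. Qed.

Lemma Cc0 a y : 0 < sqn y -> Cc a x0 y 1 0 =
  3/4 * (om y 1 * (om y 0 + a) - (1 + a * om y 0) * om y 0 * om y 1) + 3 * om y 1 * (om y 0 - a).
Proof. intros Hy. at0 y Hy. req; field [H]; lra. Qed.

Definition dom y l k := (kd l k - om y l * om y k) / nrm y.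

Lemma dom_d y l k : 0 < sqn y -> is_derive (fun s => om (upd y k s) l) (coord y k) (dom y l k).
Proof.
  intros Hy. pose proof (nrm_pos _ Hy) as Hp. pose proof (nrm_sq _ Hy) as Hn.
  unfold dom, om, nrm, kd in *. destruct y as [y0 y1]; unfold sqn, dot in *; simpl in *.
  destruct k, l; simpl; auto_derive; sidec; req; field [Hn]; lra.
Qed.

Lemma D0 a y : 0 < sqn y ->
  sum2 (fun k => xic a x0 y k * dom y 0 k) = (1 + a * om y 0)^2 * om y 1 / 4.
Proof.
  intros Hy. unfold sum2. rewrite !xic0 by auto. pose proof (nrm_pos _ Hy).
  unfold dom, kd. simpl. req. field. lra.
Qed.

Lemma D1 a y : 0 < sqn y ->
  sum2 (fun k => xic a x0 y k * dom y 1 k) = - (1 + a * om y 0)^2 * om y 0 / 4.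
Proof.
  intros Hy. unfold sum2. rewrite !xic0 by auto. pose proof (nrm_pos _ Hy). pose proof (circle y Hy) as Hc.
  unfold dom, kd. simpl. req. field [Hc]. lra.
Qed.

Definition mon l m y := om y 1 ^ l * om y 0 ^ m.
Definition dmon l m y k := INR l * dom y 1 k * om y 1 ^ pred l * om y 0 ^ m
  + om y 1 ^ l * (INR m * dom y 0 k * om y 0 ^ pred m).

Lemma dmon_d l m y k : 0 < sqn y -> is_derive (fun s => mon l m (upd y k s)) (coord y k) (dmon l m y k).
Proof.
  intros Hy. unfold mon.
  eapply dVal. apply (dMult (fun s => (om (upd y k s) 1 ^ l)%R) (fun s => (om (upd y k s) 0 ^ m)%R)).
  - apply is_derive_pow. apply dom_d; auto.
  - apply is_derive_pow. apply dom_d; auto.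
  - req. unfold dmon. ring.
Qed.

Definition uu a y := 1 + a * om y 0.

Lemma DM a l m y : 0 < sqn y ->
  sum2 (fun k => xic a x0 y k * dmon l m y k) =
  INR l * om y 1 ^ pred l * om y 0 ^ m * (- uu a y ^ 2 * om y 0 / 4)
  + INR m * om y 1 ^ l * om y 0 ^ pred m * (uu a y ^ 2 * om y 1 / 4).
Proof.
  intros Hy. rewrite <- (D0 a y Hy), <- (D1 a y Hy). unfold sum2, dmon. ring.
Qed.

Lemma S_zero a : Rabs a < 1 -> Shol a (fun _ => 0).
Proof.
  intros Ha. apply (S_ext a (fun y => 0 * 1 + 0 * 1)).
  - apply S_lin; apply S_one; auto.
  - intros; ring.
Qed.

Lemma S_comb a h h1 h2 h3 h4 h5 h6 c1 c2 c3 c4 c5 c6 :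
  Shol a h1 -> Shol a h2 -> Shol a h3 -> Shol a h4 -> Shol a h5 -> Shol a h6 ->
  (forall y, 0 < sqn y -> h y = c1 * h1 y + c2 * h2 y + c3 * h3 y + c4 * h4 y + c5 * h5 y + c6 * h6 y) ->
  Shol a h.
Proof.
  intros S1 S2 S3 S4 S5 S6 E.
  apply (S_ext a (fun y => 1 * (fun y => 1 * (fun y => c1 * h1 y + c2 * h2 y) y + 1 * (fun y => c3 * h3 y + c4 * h4 y) y) y + 1 * (fun y => c5 * h5 y + c6 * h6 y) y)).
  - apply S_lin; [apply S_lin|]; apply S_lin; auto.
  - intros y Hy; rewrite E; auto; ring.
Qed.

Lemma S_D a l m : Rabs a < 1 -> Shol a (mon l m) ->
  Shol a (fun y => INR l * om y 1 ^ pred l * om y 0 ^ m * (- uu a y ^ 2 * om y 0 / 4)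
  + INR m * om y 1 ^ l * om y 0 ^ pred m * (uu a y ^ 2 * om y 1 / 4)).
Proof.
  intros Ha Hs.
  eapply S_ext.
  - apply (S_br a (fun _ => 1) (mon l m) (fun _ _ => 0) (dmon l m)); auto.
    + apply S_one; auto.
    + intros; apply dConst.
    + intros; apply dmon_d; auto.
  - intros y Hy. cbv beta. rewrite DM by auto. unfold sum2. ring.
Qed.

Lemma S_br_mon a l1 m1 l2 m2 : Rabs a < 1 -> Shol a (mon l1 m1) -> Shol a (mon l2 m2) ->
  Shol a (fun y => mon l1 m1 y * sum2 (fun k => xic a x0 y k * dmon l2 m2 y k)
              - mon l2 m2 y * sum2 (fun k => xic a x0 y k * dmon l1 m1 y k)).
Proof.
  intros Ha H1 H2. apply S_br; auto; intros; apply dmon_d; auto.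
Qed.

Ltac ptw Hy := let Hc := fresh "Hc" in pose proof (circle _ Hy) as Hc;
  unfold mon, uu in *; simpl; req.

Section Base.
Variables (a : R) (Ha : Rabs a < 1) (Ha0 : a <> 0).

Lemma S00 : Shol a (mon 0 0).
Proof. apply (S_ext a (fun _ => 1)); [apply S_one; auto|]. intros y Hy; ptw Hy; ring. Qed.

Lemma S01 : Shol a (mon 0 1).
Proof.
  apply (S_comb a _ _ _ _ _ _ _ (2/3) a 0 0 0 0 (S_eta a 0 Ha ltac:(lia)) (S_one a Ha)
    (S_zero a Ha) (S_zero a Ha) (S_zero a Ha) (S_zero a Ha)).
  intros y Hy. rewrite P10 by auto. ptw Hy. field.
Qed.

Lemma S10 : Shol a (mon 1 0).
Proof.
  apply (S_comb a _ _ _ _ _ _ _ (2/3) 0 0 0 0 0 (S_eta a 1 Ha ltac:(lia)) (S_one a Ha)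
    (S_zero a Ha) (S_zero a Ha) (S_zero a Ha) (S_zero a Ha)).
  intros y Hy. rewrite P11 by auto. ptw Hy. field.
Qed.

Lemma S02 : Shol a (mon 0 2).
Proof.
  pose proof (S_br_mon a 0 1 1 0 Ha S01 S10) as B.
  apply (S_comb a _ _ _ _ _ _ _ (-4/(a*a)) (-1/(a*a)) (-2/a) 0 0 0 B S00 S01
    (S_zero a Ha) (S_zero a Ha) (S_zero a Ha)).
  intros y Hy. cbv beta. rewrite !DM by auto. ptw Hy. field [Hc]. auto.
Qed.

Lemma S11 : Shol a (mon 1 1).
Proof.
  pose proof (S_D a 0 1 Ha S01) as D.
  pose proof (S_eta2 a 1 0 Ha ltac:(lia) ltac:(lia)) as C.
  apply (S_comb a _ _ _ _ _ _ _ (4/18) (12/(18*a)) (-(3/a - 9*a)/18) 0 0 0 C D S10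
    (S_zero a Ha) (S_zero a Ha) (S_zero a Ha)).
  intros y Hy. cbv beta. rewrite Cc0 by auto. ptw Hy. field [Hc]. auto.
Qed.

Lemma S20 : Shol a (mon 2 0).
Proof.
  apply (S_comb a _ _ _ _ _ _ _ 1 (-1) 0 0 0 0 S00 S02
    (S_zero a Ha) (S_zero a Ha) (S_zero a Ha) (S_zero a Ha)).
  intros y Hy. ptw Hy. ring [Hc].
Qed.

Definition T N := forall l m, (l + m <= N)%nat -> Shol a (mon l m).

Lemma T2 : T 2.
Proof.
  intros l m H.
  destruct l as [|[|[|l]]], m as [|[|[|m]]]; try lia;
  first [apply S00 | apply S01 | apply S02 | apply S10 | apply S11 | apply S20].
Qed.

Lemma step_i n : T (n + 2)%nat -> Shol a (mon 1 (S (S n))).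
Proof.
  intros HT.
  pose proof (S_D a 0 (S n) Ha (HT 0%nat (S n) ltac:(lia))) as D.
  apply (S_comb a _ _ _ _ _ _ _ (4/(a*a*INR (S n))) (-1/(a*a)) (-2/a) 0 0 0 D
    (HT 1%nat n ltac:(lia)) (HT 1%nat (S n) ltac:(lia)) (S_zero a Ha) (S_zero a Ha) (S_zero a Ha)).
  intros y Hy. cbv beta. pose proof (pos_INR n). rewrite S_INR. ptw Hy. field. split; lra.
Qed.

Lemma step_ii n : T (n + 2)%nat -> Shol a (mon 0 (n + 3)%nat).
Proof.
  intros HT. destruct n as [|n].
  - pose proof (S_D a 1 0 Ha (HT 1%nat 0%nat ltac:(lia))) as D.
    apply (S_comb a _ _ _ _ _ _ _ (-4/(a*a)) (-1/(a*a)) (-2/a) 0 0 0 D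
      (HT 0%nat 1%nat ltac:(lia)) (HT 0%nat 2%nat ltac:(lia)) (S_zero a Ha) (S_zero a Ha) (S_zero a Ha)).
    intros y Hy. cbv beta. ptw Hy. field. auto.
  - pose proof (S_D a 1 (S n) Ha (HT 1%nat (S n) ltac:(lia))) as D.
    pose proof (pos_INR n) as Hn.
    set (q := (INR n + 2) * (a * a)).
    assert (Hq : q <> 0) by (unfold q; apply Rmult_integral_contrapositive_currified; [lra|]; 
      apply Rmult_integral_contrapositive_currified; auto).
    apply (S_comb a _ _ _ _ _ _ _ (-4/q) ((INR n + 1)/q) ((INR n + 1) * 2 * a / q)
      (((INR n + 1) * a * a - (INR n + 2)) / q) (- (INR n + 2) * 2 * a / q) 0 D
      (HT 0%nat n ltac:(lia)) (HT 0%nat (S n) ltac:(lia)) (HT 0%nat (S (S n)) ltac:(lia))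
      (HT 0%nat (S (S (S n))) ltac:(lia)) (S_zero a Ha)).
    intros y Hy. cbv beta. rewrite !S_INR. unfold q. replace (S n + 3)%nat with (S (S (S (S n)))) by lia.
    ptw Hy. field [Hc]. split; [|lra]. auto.
Qed.
End Base.

Section Ind.
Variables (a : R) (Ha : Rabs a < 1) (Ha0 : a <> 0).

Lemma step_iii n : T a (n + 2)%nat -> forall l m, (l + m = n + 3)%nat -> Shol a (mon l m).
Proof.
  intros HT l. induction l as [l IH] using (well_founded_induction lt_wf). intros m Hlm.
  destruct l as [|[|l]].
  - replace m with (n + 3)%nat by lia. apply step_ii; auto.
  - replace m with (S (S n)) by lia. apply step_i; auto.
  - apply (S_comb a _ _ _ _ _ _ _ 1 (-1) 0 0 0 0 (HT l m ltac:(lia)) (IH l ltac:(lia) (S (S m)) ltac:(lia))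
      (S_zero a Ha) (S_zero a Ha) (S_zero a Ha) (S_zero a Ha)).
    intros y Hy. ptw Hy. ring [Hc].
Qed.

Lemma T_all N : T a N.
Proof.
  assert (H : forall n, T a (n + 2)%nat).
  { induction n as [|n IH].
    - apply T2; auto.
    - intros l m Hlm. destruct (le_lt_dec (l + m) (n + 2)) as [Hle|Hlt].
      + apply IH; auto.
      + apply (step_iii n IH); lia. }
  intros l m Hlm. apply (H N). lia.
Qed.

Lemma S_sum (f : nat -> R*R -> R) n : (forall l, (l <= n)%nat -> Shol a (f l)) ->
  Shol a (fun y => sum_f_R0 (fun l => f l y) n).
Proof.
  induction n as [|n IH]; intros Hf.
  - simpl. apply Hf; lia.
  - apply (S_ext a (fun y => 1 * sum_f_R0 (fun l => f l y) n + 1 * f (S n) y)).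
    + apply S_lin; [apply IH; intros; apply Hf; lia | apply Hf; lia].
    + intros y Hy. simpl. ring.
Qed.

Lemma S_target n (c : nat -> nat -> R) :
  Shol a (fun y => sum_f_R0 (fun l => sum_f_R0 (fun m => c l m * (om y 1 ^ l * om y 0 ^ m)) (n - l)) n).
Proof.
  apply (S_sum (fun l y => sum_f_R0 (fun m => c l m * (om y 1 ^ l * om y 0 ^ m)) (n - l))).
  intros l _.
  apply (S_sum (fun m y => c l m * (om y 1 ^ l * om y 0 ^ m))).
  intros m _.
  apply (S_ext a (fun y => c l m * mon l m y + 0 * 0)).
  - apply S_lin; [apply (T_all (l + m)); lia | apply S_zero; auto].
  - intros; unfold mon; ring.
Qed.
End Ind.

Lemma gam_facts a t : Rabs a < 1 ->
  0 < sqn (gam a t) /\ om (gam a t) 0 = cos t /\ om (gam a t) 1 = sin t.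
Proof.
  intros Ha.
  assert (Hc : Rabs (a * cos t) < 1).
  { rewrite Rabs_mult. pose proof (COS_bound t). 
    assert (Rabs (cos t) <= 1) by (apply Rabs_le; lra).
    pose proof (Rabs_pos a). pose proof (Rabs_pos (cos t)). nra. }
  assert (Hd : 0 < 1 + a * cos t) by (destruct (Rabs_def2 _ _ Hc); lra).
  pose proof (sin2_cos2 t) as Hsc. unfold Rsqr in Hsc.
  assert (Hs : sqn (gam a t) = (/ (1 + a * cos t))^2).
  { assert (Hsc' : cos t * cos t = 1 - sin t * sin t) by lra.
    unfold sqn, dot, gam; simpl. field [Hsc']. lra. }
  assert (Hn : nrm (gam a t) = / (1 + a * cos t)).
  { unfold nrm. rewrite Hs. apply sqrt_pow2. apply Rlt_le, Rinv_0_lt_compat; lra. }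
  split; [rewrite Hs; apply pow_lt, Rinv_0_lt_compat; lra|].
  unfold om. rewrite Hn. unfold gam; simpl. split; field; lra.
Qed.

Theorem lemma3p2 (a1 : R) (ha0 : a1 <> 0) (ha1 : Rabs a1 < 1)
  (n : nat) (c : nat -> nat -> R) :
  exists xi : vfield, hol a1 xi /\
    forall (t : R) (i : nat), (i < 2)%nat ->
      xi i (0, 0) (gam a1 t) =
        sum_f_R0 (fun l => sum_f_R0 (fun m =>
            c l m * (sin t ^ l * cos t ^ m)) (n - l)) n
        * xi0 a1 i (gam a1 t).
Proof.
  destruct (S_target a1 ha1 ha0 n c) as [xi [Hh Hx]].
  exists xi. split; auto.
  intros t i _.
  destruct (gam_facts a1 t ha1) as (Hg & Ho0 & Ho1).
  change (0, 0) with x0. rewrite (Hx _ Hg).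
  unfold xi0. change (0, 0) with x0. rewrite (Rc01_eq a1 x0 (gam a1 t) i ha1 (U0 a1 _ ha1 Hg)).
  rewrite Ho0, Ho1. reflexivity.
Qed.
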